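(* Let $\alpha>0$ and $s_{\min}>0$, and put $\mu_0=\dfrac{2\alpha+s_{\min}-\sqrt{s_{\min}^2+4\alpha s_{\min}}}{2\alpha}$ (so $\mu_0\in(0,1)$ and $\frac{(1-\mu_0)^2}{\mu_0}=\frac{s_{\min}}{\alpha}$). Let $X_1,\dots,X_m$ be independent random variables with $X_i\sim\operatorname{Ber}(p_i,s_i)$, where $p_i\in(0,1]$ and $0<s_i\le s_{\min}$, and suppose $\sum_{i=1}^m p_is_i\le \mu_0$. Then $B=\sum_{i=1}^m X_i$ satisfies $\mathbb{P}(B>1)\le\alpha$.
   Context: For $p\in[0,1]$ and $s>0$, $\operatorname{Ber}(p,s)$ denotes the scaled Bernoulli distribution: $X\sim\operatorname{Ber}(p,s)$ means $X=s$ with probability $p$ and $X=0$ with probability $1-p$. *)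

(* Defs.v *)
From HB Require Import structures.
From mathcomp Require Import all_boot all_order all_algebra.
From mathcomp Require Import all_classical all_reals all_analysis.
Set Implicit Arguments. Unset Strict Implicit. Unset Printing Implicit Defensive.
Import Order.TTheory GRing.Theory Num.Theory.
Local Open Scope classical_set_scope.
Local Open Scope ring_scope.

(* Mutual independence of a finite family of real random variables:
   for every family of measurable sets B_i, the joint event has probability
   equal to the product (taking B_i = setT yields every subfamily). *)
Definition mutually_independent (R : realType) (d : measure_display)
  (T : measurableType d) (P : probability T R) (m : nat)
  (X : 'I_m -> {RV P >-> R}) : Prop :=
  forall B : 'I_m -> set R, (forall i, measurable (B i)) ->
    P (\big[setI/setT]_(i < m) (X i @^-1` B i)) =
    (\prod_(i < m) P (X i @^-1` B i))%E.

Definition scaled_bernoulli (R : realType) (d : measure_display)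
  (T : measurableType d) (P : probability T R) (Y : {RV P >-> R}) (p s : R)
  : Prop :=
  P (Y @^-1` [set s]) = p%:E /\ P (Y @^-1` [set 0]) = (1 - p)%:E.

Definition mu0 (R : realType) (alpha smin : R) : R :=
  (2 * alpha + smin - Num.sqrt (smin ^+ 2 + 4 * alpha * smin)) / (2 * alpha).

(* Main.v *)
Require Import Defs.
From HB Require Import structures.
From mathcomp Require Import all_boot all_order all_algebra.
From mathcomp Require Import all_classical all_reals all_analysis.
From mathcomp Require Import lra measurable_realfun.
Import Order.TTheory GRing.Theory Num.Theory.
Local Open Scope classical_set_scope.
Local Open Scope ring_scope.

Lemma key_alg (R : realType) (a sm mu : R) : 0 < a -> 0 < sm -> 0 <= mu ->
  mu <= mu0 a sm -> 0 < 1 - mu /\ sm * mu <= a * (1 - mu) ^+ 2.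
Proof.
move=> a0 s0 m0; rewrite /mu0.
set S := Num.sqrt _.
have S0 : 0 <= S by apply: sqrtr_ge0.
have SS : S ^+ 2 = sm ^+ 2 + 4 * a * sm.
  by rewrite sqr_sqrtr // ; apply: addr_ge0; [apply: sqr_ge0| nra].
have Ssm : sm < S.
  rewrite ltNge; apply/negP => H.
  have : S ^+ 2 <= sm ^+ 2 by rewrite ler_sqr // ?nnegrE; lra.
  rewrite SS; nra.
rewrite ler_pdivlMr ?mulr_gt0 // => H.
split; first nra.
have hu : 0 <= 2 * a + sm - S - mu * (2 * a) by lra.
have hv : 0 <= 2 * a + sm + S - mu * (2 * a) by lra.
have := mulr_ge0 hu hv.
nra.
Qed.

Arguments key_alg {R a sm mu}.

Lemma in_bigsetI (T : Type) (I : eqType) (r : seq I) (F : I -> set T) (w : T) :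
  (\big[setI/setT]_(i <- r) F i) w <-> (forall i, i \in r -> F i w).
Proof.
elim: r => [|x r IH]; first by rewrite big_nil; split.
rewrite big_cons; split.
- move=> [Fx H] i; rewrite inE => /orP [/eqP ->|ir] //.
  by move: (IH.1 H i ir).
- move=> H; split; first by apply: H; rewrite mem_head.
  by apply/IH => i ir; apply: H; rewrite inE ir orbT.
Qed.

Lemma indic_ge0' (T : Type) (R : realType) (D : set T) (w : T) : 0 <= (\1_D w : R).
Proof. by rewrite indicE ler0n. Qed.

Lemma intZind d (T : measurableType d) (R : realType) (P : probability T R) (k : R) (D : set T) :
  0 <= k -> measurable D -> (\int[P]_w ((k)%:E * (\1_D w)%:E) = k%:E * P D)%E.
Proof.
move=> k0 mD; rewrite ge0_integralZl //.
- by rewrite integral_indic // setIT.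
- by apply/measurable_EFinP; exact: measurable_indic.
Qed.

Theorem mainTheorem1 (R : realType) (d : measure_display) (T : measurableType d)
  (P : probability T R) (alpha smin : R) (m : nat)
  (X : 'I_m -> {RV P >-> R}) (p s : 'I_m -> R) :
  0 < alpha -> 0 < smin ->
  mutually_independent X ->
  (forall i, 0 < p i <= 1) ->
  (forall i, 0 < s i <= smin) ->
  (forall i, scaled_bernoulli (X i) (p i) (s i)) ->
  \sum_(i < m) p i * s i <= mu0 alpha smin ->
  (P [set w | (1 < \sum_(i < m) X i w)%R] <= alpha%:E)%E.
Proof.
move=> a0 sm0 hind hp hs hb hmu.
set mu := \sum_(i < m) p i * s i.
have mu0' : 0 <= mu.
  by apply: sumr_ge0 => i _; have := hp i; have := hs i; move=> /andP[? ?] /andP[? ?]; nra.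
have [c0 hc] := key_alg a0 sm0 mu0' hmu.
have s0 : forall i, s i != 0 by move=> i; have := hs i => /andP[? ?]; rewrite gt_eqF.
pose A i := X i @^-1` [set s i].
have mA : forall i, measurable (A i) by move=> i; apply: measurable_funPTI; exact: measurable_set1.
pose B i : set R := [set 0] `|` [set s i].
have mB : forall i, measurable (B i) by move=> i; apply: measurableU; exact: measurable_set1.
pose G := \big[setI/setT]_(i < m) (X i @^-1` B i).
have mG : measurable G.
  by rewrite /G; apply: big_ind => //; [exact: measurableI| move=> i _; exact: measurable_funPTI].
have PG : P G = 1%E.
  rewrite /G hind // big1 // => i _.
  rewrite /B preimage_setU measureU //; [|exact: measurable_funPTI..|].
    have [h1 h2] := hb i. transitivity ((1 - p i)%:E + (p i)%:E)%E; first by congr (_ + _)%E.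
    by rewrite -EFinD subrK.
  apply/seteqP; split => w //= [-> H]; by move: (s0 i); rewrite H eqxx.
have hAi : forall i, P (A i) = (p i)%:E.
  by move=> i; have [h1 h2] := hb i; exact: h1.
have pair : forall i j, P (A i `&` A j) = (if i == j then p i else p i * p j)%:E.
  move=> i j; case: eqVneq => [<-|ij]; first by rewrite setIid hAi.
  pose C k : set R := if (k == i) || (k == j) then [set s k] else setT.
  have mC : forall k, measurable (C k).
    by move=> k; rewrite /C; case: ifP => _ //; exact: measurable_set1.
  have := hind C mC.
  rewrite (bigD1 i) // [in X in _ = X](bigD1 i) //=.
  have ji : j != i by rewrite eq_sym.
  rewrite (bigD1 j) ?ji // [in X in _ = X](bigD1 j) ?ji //.
  rewrite big1; last first.
    move=> k /andP[ki kj]; rewrite /C (negbTE ki) (negbTE kj) /=; exact: preimage_setT.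
  rewrite big1; last first.
    move=> k /andP[ki kj]; rewrite /C (negbTE ki) (negbTE kj) /= preimage_setT; exact: probability_setT.
  have -> : X i @^-1` C i = A i by rewrite /C eqxx.
  have -> : X j @^-1` C j = A j by rewrite /C eqxx orbT.
  move=> H; transitivity (P (A i) * (P (A j) * 1))%E; last by rewrite mule1 !hAi.
  rewrite -H; congr (P (_ `&` _)); symmetry; exact: setIT.
set E := [set w | 1 < \sum_(i < m) X i w].
have mE : measurable E.
  have mf : measurable_fun setT (fun w => \sum_(i < m) X i w).
    by apply: measurable_sum => i; exact: measurable_funP.
  have -> : E = (fun w => \sum_(i < m) X i w) @^-1` `]1, +oo[.
    by apply/seteqP; split => w /=; rewrite in_itv /= andbT.
  by rewrite -[_ @^-1` _]setTI; apply: mf => //; exact: measurable_itv.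
have PEG : P E = P (E `&` G).
  have EU : E = (E `&` G) `|` (E `&` ~` G) by rewrite -setIUr setUCr setIT.
  rewrite {1}EU measureU0 //; [exact: measurableI| apply: measurableI => //; exact: measurableC|].

  apply/eqP; rewrite eq_le measure_ge0 andbT.
  have : P (~` G) = 0%E by rewrite probability_setC // PG subee.
  move=> <-; apply: le_measure; rewrite ?inE; [apply: measurableI => //; exact: measurableC|exact: measurableC|exact: subIsetr].
have mI : forall D : set T, measurable D -> measurable_fun [set: T] (EFin \o (\1_D : T -> R)).
  by move=> D mD; apply/measurable_EFinP; exact: measurable_indic.
pose F := fun w => (((1 - mu) ^+ 2)%:E * (\1_(E `&` G) w)%:E + (2 * mu)%:E * \sum_(i < m) ((s i)%:E * (\1_(A i) w)%:E))%E.
pose H := fun w => (\sum_(i < m) \sum_(j < m) ((s i * s j)%:E * (\1_(A i `&` A j) w)%:E) + (mu ^+ 2)%:E)%E.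
have FE : forall w, F w = ((1 - mu) ^+ 2 * \1_(E `&` G) w + 2 * mu * \sum_(i < m) (s i * \1_(A i) w))%:E.
  move=> w; rewrite /F; under eq_bigr => i _ do rewrite -EFinM.
  by rewrite sumEFin -!EFinM -EFinD.
have HE : forall w, H w = (\sum_(i < m) \sum_(j < m) (s i * s j * \1_(A i `&` A j) w) + mu ^+ 2)%:E.
  move=> w; rewrite /H; under eq_bigr => i _ do (under eq_bigr => j _ do rewrite -EFinM; rewrite sumEFin).
  by rewrite sumEFin -EFinD.
have FH : (\int[P]_w F w <= \int[P]_w H w)%E.
  apply: ge0_le_integral => //.
  - move=> w _; rewrite FE lee_fin; apply: addr_ge0; apply: mulr_ge0; rewrite ?sqr_ge0 ?indic_ge0' //.
      nra.
    by apply: sumr_ge0 => i _; apply: mulr_ge0; rewrite ?indic_ge0' //; have := hs i => /andP[/ltW].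
  - apply: emeasurable_funD; apply: measurable_funeM; first by apply: mI; exact: measurableI.
    by apply: emeasurable_sum => i; apply: measurable_funeM; exact: mI (mA i).
  - apply: emeasurable_funD => //; apply: emeasurable_sum => i; apply: emeasurable_sum => j.
    by apply: measurable_funeM; apply: mI; exact: measurableI.
  move=> w _; rewrite FE HE lee_fin.
  set Y := \sum_(i < m) s i * \1_(A i) w.
  have -> : \sum_(i < m) \sum_(j < m) s i * s j * \1_(A i `&` A j) w = Y ^+ 2.
    rewrite expr2 mulr_suml; apply: eq_bigr => i _; rewrite mulr_sumr; apply: eq_bigr => j _.
    by rewrite indicI /= mulrACA.
  case: (pselect ((E `&` G) w)) => [[Ew Gw]|nEG].
  - have EGw : (E `&` G) w by split.
    rewrite indicE (mem_set EGw) mulr1.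
    have YX : Y = \sum_(i < m) X i w.
      apply: eq_bigr => i _.
      have := (in_bigsetI _ _ _ _ w).1 Gw i (mem_index_enum i).
      rewrite /A indicE /= => -[H0|Hs].
        by rewrite H0 memNset ?mulr0 //= => h; move: (s0 i); rewrite -h H0 eqxx.
      by rewrite mem_set // mulr1.
    have Y1 : 1 < Y by rewrite YX; exact: Ew.
    have : 0 < (Y - 1) * (Y + 1 - 2 * mu) by apply: mulr_gt0; lra.
    nra.
  - rewrite indicE memNset // mulr0 add0r.
    have := sqr_ge0 (Y - mu); nra.
have IF : (\int[P]_w F w = ((1 - mu) ^+ 2)%:E * P (E `&` G) + (2 * mu)%:E * \sum_(i < m) ((s i)%:E * (p i)%:E))%E.
  have snn : forall i, 0 <= s i by move=> i; have := hs i => /andP[/ltW].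
  rewrite /F ge0_integralD //; first last.
  - apply: measurable_funeM; apply: emeasurable_sum => i; apply: measurable_funeM; exact: mI (mA i).
  - move=> x _; apply: mule_ge0; first by rewrite lee_fin; nra.
    by apply: sume_ge0 => i _; apply: mule_ge0; rewrite lee_fin ?indic_ge0'.
  - by apply: measurable_funeM; apply: mI; exact: measurableI.
  - by move=> x _; apply: mule_ge0; rewrite lee_fin ?sqr_ge0 ?indic_ge0'.
  rewrite intZind ?sqr_ge0 //; last exact: measurableI.
  congr (_ + _)%E.
  rewrite ge0_integralZl //; first last.
  - by rewrite lee_fin; nra.
  - by move=> x _; apply: sume_ge0 => i _; apply: mule_ge0; rewrite lee_fin ?indic_ge0'.
  - by apply: emeasurable_sum => i; apply: measurable_funeM; exact: mI (mA i).
  congr (_ * _)%E.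
  rewrite ge0_integral_sum //; first last.
  - by move=> i x _; apply: mule_ge0; rewrite lee_fin ?indic_ge0'.
  - by move=> i; apply: measurable_funeM; exact: mI (mA i).
  by apply: eq_bigr => i _; rewrite intZind // hAi.
have snn : forall i, 0 <= s i by move=> i; have := hs i => /andP[/ltW].
have IH : (\int[P]_w H w = \sum_(i < m) \sum_(j < m) ((s i * s j)%:E * P (A i `&` A j)) + (mu ^+ 2)%:E)%E.
  have mAA : forall i j, measurable (A i `&` A j) by move=> i j; exact: measurableI.
  rewrite /H ge0_integralD //; first last.
  - by move=> x _; rewrite lee_fin sqr_ge0.
  - by apply: emeasurable_sum => i; apply: emeasurable_sum => j; apply: measurable_funeM; exact: mI (mAA i j).
  - by move=> x _; apply: sume_ge0 => i _; apply: sume_ge0 => j _; apply: mule_ge0; rewrite lee_fin ?indic_ge0' ?mulr_ge0.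
  rewrite integral_cst //= probability_setT mule1.
  congr (_ + _)%E.
  rewrite ge0_integral_sum //; first last.
  - by move=> i x _; apply: sume_ge0 => j _; apply: mule_ge0; rewrite lee_fin ?indic_ge0' ?mulr_ge0.
  - by move=> i; apply: emeasurable_sum => j; apply: measurable_funeM; exact: mI (mAA i j).
  apply: eq_bigr => i _.
  rewrite ge0_integral_sum //; first last.
  - by move=> j x _; apply: mule_ge0; rewrite lee_fin ?indic_ge0' ?mulr_ge0.
  - by move=> j; apply: measurable_funeM; exact: mI (mAA i j).
  by apply: eq_bigr => j _; rewrite intZind ?mulr_ge0.
have mEG : measurable (E `&` G) by exact: measurableI.
have Pe : P (E `&` G) = (fine (P (E `&` G)))%:E by rewrite fineK // fin_num_measure.
set e := fine (P (E `&` G)) in Pe.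
set V := \sum_(i < m) s i ^+ 2 * (p i - p i ^+ 2).
have S1 : (\sum_(i < m) ((s i)%:E * (p i)%:E))%E = mu%:E.
  by rewrite /mu -sumEFin; apply: eq_bigr => i _; rewrite -EFinM mulrC.
have S2 : (\sum_(i < m) \sum_(j < m) ((s i * s j)%:E * P (A i `&` A j)))%E = (mu ^+ 2 + V)%:E.
  transitivity (\sum_(i < m) \sum_(j < m) (s i * s j * (p i * p j + (i == j)%:R * (p i - p i ^+ 2)))%:E)%E.
    apply: eq_bigr => i _; apply: eq_bigr => j _; rewrite pair -EFinM; congr (_ * _)%:E.
    by case: eqVneq => [->|_]; rewrite ?mul1r ?mul0r ?addr0 //; rewrite expr2 addrC subrK.
  under eq_bigr => i _ do rewrite sumEFin.
  rewrite sumEFin; congr (_)%:E.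
  transitivity (\sum_(i < m) ((s i * p i) * \sum_(j < m) (s j * p j) + s i ^+ 2 * (p i - p i ^+ 2))).
    apply: eq_bigr => i _.
    under eq_bigr => j _ do rewrite mulrDr.
    rewrite big_split /= mulr_sumr; congr (_ + _).
      by apply: eq_bigr => j _; rewrite mulrACA.
    rewrite (bigD1 i) //= eqxx big1 ?addr0; first by rewrite mul1r expr2.
    by move=> j ji; rewrite eq_sym (negbTE ji) mul0r mulr0.
  rewrite big_split /= -mulr_suml expr2; congr (_ * _ + _).
    by rewrite /mu; apply: eq_bigr => i _; rewrite mulrC.
  by rewrite /mu; apply: eq_bigr => i _; rewrite mulrC.
rewrite IF IH Pe S1 S2 -!EFinM -!EFinD lee_fin in FH.
have hV : V <= smin * mu.
  rewrite /mu mulr_sumr; apply: ler_sum => i _.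
  have := hs i; have := hp i => /andP[h1 h2] /andP[h3 h4].
  have : 0 <= (s i * p i) * (smin - s i * (1 - p i)) by apply: mulr_ge0; nra.
  nra.
rewrite PEG Pe lee_fin.
have c2 : 0 < (1 - mu) ^+ 2 by rewrite exprn_gt0.
rewrite -(ler_pM2l c2).
nra.
Qed.
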